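(* For a skew brace $A$, the spaces $\mathrm{Spec}\,A$ and $\mathrm{Spec}(A/\mathrm{Nil}\,A)$ (with their spectral topologies) are homeomorphic.
   Context: A (left) skew brace is a triple $(A,+,\circ)$ where $(A,+)$ and $(A,\circ)$ are groups such that $a\circ(b+c)=a\circ b-a+a\circ c$ for all $a,b,c$; common identity $e$. Put $\lambda_a(b)=-a+a\circ b$ and $a*b=-a+a\circ b-b$. An ideal is a normal subgroup $I$ of both $(A,+)$ and $(A,\circ)$ with $\lambda_a(I)\subseteq I$ for all $a$; for an ideal $I$, $A/I=\{a+I\}$ is a skew brace with $(a+I)+(b+I)=(a+b)+I$, $(a+I)\circ(b+I)=(a\circ b)+I$. A prime ideal is a proper ideal $P$ such that for any subsets $X,Y$ of $A$, $\{x*y\mid x\in X,y\in Y\}\subseteq P$ implies $X\subseteq P$ or $Y\subseteq P$; $\mathrm{Spec}\,A$ is the set of prime ideals, with the spectral topology whose closed sets are $H(I)=\{P\in\mathrm{Spec}\,A\mid I\subseteq P\}$, $I$ an ideal. $\mathrm{Nil}\,A$ is the intersection of all prime ideals of $A$. *)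

(* Defs.v *)
From Stdlib Require Import ClassicalEpsilon.
Set Implicit Arguments.

Record brace_ops := BraceOps {
  car :> Type;
  badd : car -> car -> car;
  bopp : car -> car;
  bzero : car;
  bcirc : car -> car -> car;
  binv : car -> car
}.

Section Ops.
Variable A : brace_ops.
Local Notation "a + b" := (badd A a b).
Local Notation "- a" := (bopp A a).
Local Notation e := (bzero A).
Local Notation "a 'o' b" := (bcirc A a b) (at level 40, left associativity).

Definition is_skew_brace : Prop :=
  (forall a b c, a + (b + c) = (a + b) + c) /\
  (forall a, e + a = a) /\ (forall a, a + e = a) /\
  (forall a, - a + a = e) /\ (forall a, a + - a = e) /\
  (forall a b c, a o (b o c) = (a o b) o c) /\
  (forall a, e o a = a) /\ (forall a, a o e = a) /\
  (forall a, binv A a o a = e) /\ (forall a, a o binv A a = e) /\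
  (forall a b c, a o (b + c) = a o b + - a + a o c).

Definition lam (a b : A) : A := - a + a o b.
Definition bstar (a b : A) : A := - a + a o b + - b.

Definition ideal (I : A -> Prop) : Prop :=
  I e /\ (forall x y, I x -> I y -> I (x + y)) /\ (forall x, I x -> I (- x)) /\
  (forall a x, I x -> I (a + x + - a)) /\
  (forall x y, I x -> I y -> I (x o y)) /\ (forall x, I x -> I (binv A x)) /\
  (forall a x, I x -> I (a o x o binv A a)) /\
  (forall a x, I x -> I (lam a x)).

Definition prime_ideal (P : A -> Prop) : Prop :=
  ideal P /\ (exists a, ~ P a) /\
  forall X Y : A -> Prop,
    (forall x y, X x -> Y y -> P (bstar x y)) ->
    (forall x, X x -> P x) \/ (forall y, Y y -> P y).

Definition Spec : Type := { P : A -> Prop | prime_ideal P }.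

Definition H (I : A -> Prop) : Spec -> Prop :=
  fun P => forall x, I x -> proj1_sig P x.

Definition spec_closed (C : Spec -> Prop) : Prop :=
  exists I, ideal I /\ forall P, C P <-> H I P.

Definition Nil : A -> Prop := fun a => forall P, prime_ideal P -> P a.

Definition coset (I : A -> Prop) (a : A) : A -> Prop :=
  fun x => exists i, I i /\ x = a + i.

Definition quot_car (I : A -> Prop) : Type :=
  { S : A -> Prop | exists a, S = coset I a }.

Definition rep (I : A -> Prop) (S : quot_car I) : A :=
  proj1_sig (constructive_indefinite_description _ (proj2_sig S)).

Definition mkq (I : A -> Prop) (a : A) : quot_car I :=
  exist _ (coset I a) (ex_intro _ a eq_refl).

Definition quotient (I : A -> Prop) : brace_ops :=
  @BraceOps (quot_car I)
    (fun S T => mkq I (rep S + rep T))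
    (fun S => mkq I (- rep S))
    (mkq I e)
    (fun S T => mkq I (rep S o rep T))
    (fun S => mkq I (binv A (rep S))).

End Ops.

Definition continuous_cl {X Y : Type} (clX : (X -> Prop) -> Prop)
  (clY : (Y -> Prop) -> Prop) (f : X -> Y) : Prop :=
  forall C, clY C -> clX (fun x => C (f x)).

Definition homeomorphic {X Y : Type} (clX : (X -> Prop) -> Prop)
  (clY : (Y -> Prop) -> Prop) : Prop :=
  exists (f : X -> Y) (g : Y -> X),
    (forall x, g (f x) = x) /\ (forall y, f (g y) = y) /\
    continuous_cl clX clY f /\ continuous_cl clY clX g.

(* Main.v *)
Require Import Defs.
From Stdlib Require Import FunctionalExtensionality PropExtensionality ProofIrrelevance ClassicalEpsilon.

Section Brace.
Variable A : brace_ops.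
Hypothesis hA : is_skew_brace A.
Local Notation "a + b" := (badd A a b).
Local Notation "- a" := (bopp A a).
Local Notation e := (bzero A).
Local Notation "a 'o' b" := (bcirc A a b) (at level 40, left associativity).
Local Notation bi := (binv A).

Ltac dA := destruct hA as (h1&h2&h3&h4&h5&h6&h7&h8&h9&h10&h11).

Lemma addA a b c : a + (b + c) = (a + b) + c. Proof. dA; auto. Qed.
Lemma add0l a : e + a = a. Proof. dA; auto. Qed.
Lemma add0r a : a + e = a. Proof. dA; auto. Qed.
Lemma addNl a : - a + a = e. Proof. dA; auto. Qed.
Lemma addNr a : a + - a = e. Proof. dA; auto. Qed.
Lemma cA a b c : a o (b o c) = (a o b) o c. Proof. dA; auto. Qed.
Lemma c0l a : e o a = a. Proof. dA; auto. Qed.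
Lemma c0r a : a o e = a. Proof. dA; auto. Qed.
Lemma cNl a : bi a o a = e. Proof. dA; auto. Qed.
Lemma cNr a : a o bi a = e. Proof. dA; auto. Qed.
Lemma bdist a b c : a o (b + c) = a o b + - a + a o c. Proof. dA; auto. Qed.

Lemma addKl a b : - a + (a + b) = b.
Proof. rewrite addA, addNl, add0l; reflexivity. Qed.
Lemma addNKl a b : a + (- a + b) = b.
Proof. rewrite addA, addNr, add0l; reflexivity. Qed.
Lemma opp_uniq a b : a + b = e -> b = - a.
Proof. intro E. rewrite <- (addKl a b), E, add0r. reflexivity. Qed.
Lemma oppK a : - - a = a.
Proof. symmetry. apply opp_uniq. apply addNl. Qed.
Lemma oppD a b : - (a + b) = - b + - a.
Proof. symmetry. apply opp_uniq. rewrite <- addA, (addA b), addNr, add0l, addNr. reflexivity. Qed.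
Lemma opp0 : - e = e.
Proof. rewrite <- (add0l (- e)), addNr. reflexivity. Qed.

Lemma cKl a b : bi a o (a o b) = b.
Proof. rewrite cA, cNl, c0l; reflexivity. Qed.
Lemma cNKl a b : a o (bi a o b) = b.
Proof. rewrite cA, cNr, c0l; reflexivity. Qed.
Lemma bi_uniq a b : a o b = e -> b = bi a.
Proof. intro E. rewrite <- (cKl a b), E, c0r. reflexivity. Qed.
Lemma biK a : bi (bi a) = a.
Proof. symmetry. apply bi_uniq. apply cNl. Qed.
Lemma biD a b : bi (a o b) = bi b o bi a.
Proof. symmetry. apply bi_uniq. rewrite <- cA, (cA b), cNr, c0l, cNr. reflexivity. Qed.
Lemma bi0 : bi e = e.
Proof. rewrite <- (c0l (bi e)), cNr. reflexivity. Qed.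

Ltac gnorm := repeat (first [rewrite oppD | rewrite oppK | rewrite opp0 | rewrite <- addA
  | rewrite addKl | rewrite addNKl | rewrite add0l | rewrite add0r | rewrite addNr | rewrite addNl]).
Ltac cnorm := repeat (first [rewrite biD | rewrite biK | rewrite bi0 | rewrite <- cA
  | rewrite cKl | rewrite cNKl | rewrite c0l | rewrite c0r | rewrite cNr | rewrite cNl]).

Ltac gclose m := match goal with |- ?J ?l => match type of m with ?J ?r =>
  replace l with r; [exact m | gnorm; reflexivity] end end.
Ltac cclose m := match goal with |- ?J ?l => match type of m with ?J ?r =>
  replace l with r; [exact m | cnorm; reflexivity] end end.

Lemma lam_circ x y : lam A x (bi x o y) = - x + y.
Proof. unfold lam. rewrite cNKl. reflexivity. Qed.

Lemma bi_opp x : bi x o (- x) = bi x + bi x.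
Proof.
  assert (E : bi x o x + - bi x + bi x o (- x) = bi x).
  { rewrite <- bdist, addNr, c0r. reflexivity. }
  rewrite cNl, add0l in E.
  rewrite <- (addNKl (bi x) (bi x o (- x))), E. reflexivity.
Qed.

Lemma lam_inv x y : lam A (bi x) (- x + y) = bi x o y.
Proof. unfold lam. rewrite bdist, bi_opp. gnorm. reflexivity. Qed.

Section Ideal.
Variable I : A -> Prop.
Hypothesis HI : ideal A I.

Lemma i_e : I e. Proof. apply HI. Qed.
Lemma i_add {x y} : I x -> I y -> I (x + y). Proof. apply HI. Qed.
Lemma i_opp {x} : I x -> I (- x). Proof. apply HI. Qed.
Lemma i_nadd a {x} : I x -> I (a + x + - a). Proof. apply HI. Qed.
Lemma i_circ {x y} : I x -> I y -> I (x o y). Proof. apply HI. Qed.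
Lemma i_bi {x} : I x -> I (bi x). Proof. apply HI. Qed.
Lemma i_nc a {x} : I x -> I (a o x o bi a). Proof. apply HI. Qed.
Lemma i_lam a {x} : I x -> I (lam A a x). Proof. apply HI. Qed.

Definition rel x y := I (- x + y).

Lemma rel_crel x y : rel x y <-> I (bi x o y).
Proof.
  unfold rel; split; intro h.
  - rewrite <- lam_inv. apply i_lam. exact h.
  - rewrite <- lam_circ. apply i_lam. exact h.
Qed.

Lemma rel_refl x : rel x x.
Proof. unfold rel. rewrite addNl. apply i_e. Qed.
Lemma rel_sym x y : rel x y -> rel y x.
Proof. unfold rel; intro h. apply i_opp in h. gclose h. Qed.
Lemma rel_trans x y z : rel x y -> rel y z -> rel x z.
Proof. unfold rel; intros h k. pose proof (i_add h k) as m. gclose m. Qed.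

Lemma rel_add a a' b b' : rel a a' -> rel b b' -> rel (a + b) (a' + b').
Proof.
  unfold rel; intros h1 h2.
  pose proof (i_add (i_nadd (- b) h1) h2) as m.
  gclose m.
Qed.

Lemma rel_opp a a' : rel a a' -> rel (- a) (- a').
Proof.
  unfold rel; intros h1.
  pose proof (i_nadd a (i_opp h1)) as m. gclose m.
Qed.

Lemma rel_circ a a' b b' : rel a a' -> rel b b' -> rel (a o b) (a' o b').
Proof.
  rewrite !rel_crel; intros h1 h2.
  pose proof (i_circ (i_nc (bi b) h1) h2) as m.
  cclose m.
Qed.

Lemma rel_bi a a' : rel a a' -> rel (bi a) (bi a').
Proof.
  rewrite !rel_crel; intros h1.
  pose proof (i_nc a (i_bi h1)) as m. cclose m.
Qed.

Lemma sig_eq (T : Type) (P : T -> Prop) (x y : sig P) : proj1_sig x = proj1_sig y -> x = y.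
Proof.
  destruct x as [x px], y as [y py]; simpl; intro E; subst y.
  rewrite (proof_irrelevance _ px py). reflexivity.
Qed.

Lemma coset_eq a b : rel a b -> coset A I a = coset A I b.
Proof.
  intro h. apply functional_extensionality; intro x.
  apply propositional_extensionality; unfold coset; split.
  - intros [i [Hi ->]]. exists (- b + a + i). split.
    + apply i_add; [apply rel_sym; exact h | exact Hi].
    + gnorm. reflexivity.
  - intros [i [Hi ->]]. exists (- a + b + i). split.
    + apply i_add; [exact h | exact Hi].
    + gnorm. reflexivity.
Qed.

Lemma mkq_eq a b : rel a b -> mkq A I a = mkq A I b.
Proof. intro h. apply sig_eq. simpl. apply coset_eq. exact h. Qed.

Lemma rep_spec (S : quot_car A I) : proj1_sig S = coset A I (rep S).
Proof.
  unfold rep. destruct (constructive_indefinite_description _ _) as [a Ha]. simpl. exact Ha.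
Qed.

Lemma mkq_rep (S : quot_car A I) : mkq A I (rep S) = S.
Proof. apply sig_eq. simpl. symmetry. apply rep_spec. Qed.

Lemma surj (S : quot_car A I) : exists s, S = mkq A I s.
Proof. exists (rep S). symmetry. apply mkq_rep. Qed.

Lemma rep_mkq a : rel (rep (mkq A I a)) a.
Proof.
  pose proof (rep_spec (mkq A I a)) as E. simpl in E.
  assert (C : coset A I a a) by (exists e; split; [apply i_e | rewrite add0r; reflexivity]).
  rewrite E in C. destruct C as [i [Hi Ei]]. unfold rel.
  rewrite Ei at 2. rewrite addKl. exact Hi.
Qed.

Lemma qadd a b : badd (quotient A I) (mkq A I a) (mkq A I b) = mkq A I (a + b).
Proof. simpl. apply mkq_eq. apply rel_add; apply rep_mkq. Qed.
Lemma qopp a : bopp (quotient A I) (mkq A I a) = mkq A I (- a).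
Proof. simpl. apply mkq_eq. apply rel_opp; apply rep_mkq. Qed.
Lemma qcirc a b : bcirc (quotient A I) (mkq A I a) (mkq A I b) = mkq A I (a o b).
Proof. simpl. apply mkq_eq. apply rel_circ; apply rep_mkq. Qed.
Lemma qbi a : binv (quotient A I) (mkq A I a) = mkq A I (bi a).
Proof. simpl. apply mkq_eq. apply rel_bi; apply rep_mkq. Qed.
Lemma qe : bzero (quotient A I) = mkq A I e.
Proof. reflexivity. Qed.
Lemma qlam a b : lam (quotient A I) (mkq A I a) (mkq A I b) = mkq A I (lam A a b).
Proof. unfold lam. rewrite qcirc, qopp, qadd. reflexivity. Qed.
Lemma qbstar a b : bstar (quotient A I) (mkq A I a) (mkq A I b) = mkq A I (bstar A a b).
Proof. unfold bstar. rewrite qcirc, !qopp, !qadd. reflexivity. Qed.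

Lemma sup_rel (J : A -> Prop) : ideal A J -> (forall x, I x -> J x) ->
  forall a b, rel a b -> J a -> J b.
Proof.
  intros HJ sub a b h ja. replace b with (a + (- a + b)) by (gnorm; reflexivity).
  destruct HJ as (_&jadd&_). apply jadd; [exact ja | apply sub; exact h].
Qed.

Lemma pull_ideal (J : quotient A I -> Prop) : ideal (quotient A I) J ->
  ideal A (fun a => J (mkq A I a)).
Proof.
  intros (j1&j2&j3&j4&j5&j6&j7&j8).
  repeat split.
  - exact j1.
  - intros x y hx hy. rewrite <- qadd. apply j2; assumption.
  - intros x hx. rewrite <- qopp. apply j3; assumption.
  - intros a x hx. rewrite <- !qadd, <- qopp. apply j4; assumption.
  - intros x y hx hy. rewrite <- qcirc. apply j5; assumption.
  - intros x hx. rewrite <- qbi. apply j6; assumption.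
  - intros a x hx. rewrite <- !qcirc, <- qbi. apply j7; assumption.
  - intros a x hx. rewrite <- qlam. apply j8; assumption.
Qed.

Lemma push_ideal (J : A -> Prop) : ideal A J ->
  ideal (quotient A I) (fun S => exists a, J a /\ S = mkq A I a).
Proof.
  intros (j1&j2&j3&j4&j5&j6&j7&j8).
  repeat split.
  - exists e; split; [exact j1 | reflexivity].
  - intros x y [a [ha ->]] [b [hb ->]]. exists (a + b); split; [auto | apply qadd].
  - intros x [a [ha ->]]. exists (- a); split; [auto | apply qopp].
  - intros t x [a [ha ->]]. destruct (surj t) as [s ->].
    exists (s + a + - s); split; [auto | rewrite qopp, !qadd; reflexivity].
  - intros x y [a [ha ->]] [b [hb ->]]. exists (a o b); split; [auto | apply qcirc].
  - intros x [a [ha ->]]. exists (bi a); split; [auto | apply qbi].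
  - intros t x [a [ha ->]]. destruct (surj t) as [s ->].
    exists (s o a o bi s); split; [auto | rewrite qbi, !qcirc; reflexivity].
  - intros t x [a [ha ->]]. destruct (surj t) as [s ->].
    exists (lam A s a); split; [auto | apply qlam].
Qed.

End Ideal.
Arguments surj {I} S.
Arguments mkq_rep {I} S.

Lemma Nil_ideal : ideal A (Nil A).
Proof.
  unfold Nil. repeat split; intros;
  match goal with HP : prime_ideal A ?P |- _ =>
    repeat match goal with h : forall Q, prime_ideal A Q -> Q _ |- _ => specialize (h P HP) end;
    destruct HP as [(j1&j2&j3&j4&j5&j6&j7&j8) _] end;
  auto.
Qed.

Local Notation N := (Nil A).
Local Notation Q := (quotient A (Nil A)).

Lemma P_mkq (P : A -> Prop) : prime_ideal A P -> forall a, P (rep (mkq A N a)) <-> P a.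
Proof.
  intros HP a. assert (sub : forall x, N x -> P x) by (intros x hx; apply hx; exact HP).
  split; apply (@sup_rel N P (proj1 HP) sub).
  - apply rep_mkq, Nil_ideal.
  - apply rel_sym; [apply Nil_ideal | apply rep_mkq, Nil_ideal].
Qed.

Lemma f_prime (P : A -> Prop) : prime_ideal A P -> prime_ideal Q (fun S => P (rep S)).
Proof.
  intros HP. pose proof HP as HP0. destruct HP as [HI [[a na] pr]].
  pose proof (P_mkq _ HP0) as E.
  assert (Hq : ideal Q (fun S => exists a, P a /\ S = mkq A N a)) by (apply push_ideal; [apply Nil_ideal | exact HI]).
  assert (eqf : (fun S => P (rep S)) = (fun S => exists a, P a /\ S = mkq A N a)).
  { apply functional_extensionality; intro S. apply propositional_extensionality.
    destruct (surj S) as [s ->]. rewrite E. split.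
    - intro h; exists s; auto.
    - intros [b [hb hs]]. rewrite <- E, hs, E. exact hb. }
  split; [exact (eq_rect _ (ideal Q) Hq _ (eq_sym eqf)) |]. split.
  - exists (mkq A N a). rewrite E. exact na.
  - intros X Y hxy.
    destruct (pr (fun a => X (mkq A N a)) (fun a => Y (mkq A N a))) as [h | h].
    + intros x y hx hy. apply E. rewrite <- qbstar by apply Nil_ideal. apply hxy; assumption.
    + left. intros S hS. destruct (surj S) as [s ->]. apply E. apply h. exact hS.
    + right. intros S hS. destruct (surj S) as [s ->]. apply E. apply h. exact hS.
Qed.

Lemma g_prime (P : Q -> Prop) : prime_ideal Q P -> prime_ideal A (fun a => P (mkq A N a)).
Proof.
  intros [HI [[S nS] pr]]. split; [apply pull_ideal; [apply Nil_ideal | exact HI] |]. split.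
  - exists (rep S). rewrite mkq_rep by apply Nil_ideal. exact nS.
  - intros X Y hxy.
    destruct (pr (fun S => exists x, X x /\ S = mkq A N x) (fun S => exists x, Y x /\ S = mkq A N x)) as [h | h].
    + intros s t [x [hx ->]] [y [hy ->]]. rewrite qbstar by apply Nil_ideal. apply hxy; assumption.
    + left. intros x hx. apply h. exists x; auto.
    + right. intros x hx. apply h. exists x; auto.
Qed.

Definition fmap (P : Spec A) : Spec Q :=
  exist _ (fun S => proj1_sig P (rep S)) (f_prime _ (proj2_sig P)).
Definition gmap (P : Spec Q) : Spec A :=
  exist _ (fun a => proj1_sig P (mkq A N a)) (g_prime _ (proj2_sig P)).

Theorem main : homeomorphic (@spec_closed A) (@spec_closed Q).
Proof.
  exists fmap, gmap. split; [| split; [| split]].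
  - intros P. apply sig_eq. simpl. apply functional_extensionality; intro a.
    apply propositional_extensionality. apply P_mkq, (proj2_sig P).
  - intros P. apply sig_eq. simpl. apply functional_extensionality; intro S.
    rewrite mkq_rep by apply Nil_ideal. reflexivity.
  - intros C [J [HJ HC]]. exists (fun a => J (mkq A N a)).
    split; [apply pull_ideal; [apply Nil_ideal | exact HJ] |].
    intros P. rewrite HC. unfold H; simpl. split.
    + intros h a ha. apply (P_mkq _ (proj2_sig P)). apply h. exact ha.
    + intros h S hS. destruct (surj S) as [s ->]. apply (P_mkq _ (proj2_sig P)).
      apply h. exact hS.
  - intros C [J [HJ HC]]. exists (fun S => exists a, J a /\ S = mkq A N a).
    split; [apply push_ideal; [apply Nil_ideal | exact HJ] |].
    intros P. rewrite HC. unfold H; simpl. split.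
    + intros h S [a [ha ->]]. apply h. exact ha.
    + intros h a ha. apply h. exists a; auto.
Qed.

End Brace.

Theorem corollary4p17 (A : brace_ops) (hA : is_skew_brace A) :
  homeomorphic (@spec_closed A) (@spec_closed (@quotient A (Nil A))).
Proof. exact (main _ hA). Qed.
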